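(* Let $f$ be a polynomial with integer coefficients of degree $r\ge3$ with positive leading coefficient, positive and strictly increasing on $[0,\infty)$. For each positive integer $N$ and real $x$ let \[ g_N(x)=\frac{f'(x)\left(1-\frac{f(x)}{f(N)}\right)}{\int_0^N f'(t)\left(1-\frac{f(t)}{f(N)}\right)dt}. \] Then for any fixed $\epsilon>0$, $\lim_{N\to\infty}N^{2-\epsilon}\sup_{x\in[0,N]}|g_N'(x)|=0$. *)

(* Defs.v *)
From Stdlib Require Import Reals ZArith.
From Coquelicot Require Import Coquelicot.
Open Scope R_scope.

Definition polyZ (a : nat -> Z) (r : nat) (x : R) : R :=
  sum_f_R0 (fun i => IZR (a i) * x ^ i) r.

Definition hN (f : R -> R) (N : nat) (x : R) : R :=
  Derive f x * (1 - f x / f (INR N)).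

Definition gN (f : R -> R) (N : nat) (x : R) : R :=
  hN f N x / RInt (hN f N) 0 (INR N).

Definition supDg (f : R -> R) (N : nat) : Rbar :=
  Lub_Rbar (fun y => exists x, 0 <= x <= INR N /\ y = Rabs (Derive (gN f N) x)).

(* Main.v *)
Require Import Defs.
From Stdlib Require Import Reals ZArith Lra Lia Psatz.
From Coquelicot Require Import Coquelicot.
Open Scope R_scope.

Definition P (c : nat -> R) (n : nat) (x : R) : R := sum_f_R0 (fun i => c i * x ^ i) n.
Definition dc (c : nat -> R) (i : nat) : R := INR (S i) * c (S i).
Definition A (c : nat -> R) (n : nat) : R := sum_f_R0 (fun i => Rabs (c i)) n.

Lemma P_S c n x : P c (S n) x = P c n x + c (S n) * x ^ (S n).
Proof. reflexivity. Qed.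

Lemma A_nonneg c n : 0 <= A c n.
Proof.
  induction n; unfold A in *; simpl; [apply Rabs_pos|].
  pose proof (Rabs_pos (c (S n))); lra.
Qed.

Lemma P_bound c n x M : 0 <= x <= M -> 1 <= M -> Rabs (P c n x) <= A c n * M ^ n.
Proof.
  intros Hx HM. induction n.
  - unfold P, A; simpl. rewrite !Rmult_1_r. lra.
  - rewrite P_S. change (A c (S n)) with (A c n + Rabs (c (S n))).
    eapply Rle_trans; [apply Rabs_triang|].
    rewrite Rabs_mult. rewrite (Rabs_right (x ^ S n)) by (apply Rle_ge, pow_le; lra).
    assert (h1 : x ^ S n <= M ^ S n) by (apply pow_incr; lra).
    assert (h2 : M ^ n <= M ^ S n) by (apply Rle_pow; [lra| lia]).
    pose proof (A_nonneg c n). pose proof (Rabs_pos (c (S n))).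
    assert (A c n * M ^ n <= A c n * M ^ S n) by (apply Rmult_le_compat_l; lra).
    assert (Rabs (c (S n)) * x ^ S n <= Rabs (c (S n)) * M ^ S n) by (apply Rmult_le_compat_l; lra).
    lra.
Qed.

Lemma P_derive c n x : is_derive (P c (S n)) x (P (dc c) n x).
Proof.
  induction n.
  - apply is_derive_ext with (fun y => c 0%nat + c 1%nat * y).
    { intros; unfold P; simpl; ring. }
    unfold P, dc; simpl. auto_derive; auto. ring.
  - apply is_derive_ext with (fun y => P c (S n) y + c (S (S n)) * y ^ (S (S n))).
    { intros; reflexivity. }
    auto_derive.
    { exists (P (dc c) n x); exact IHn. }
    replace (Derive (fun x0 => P c (S n) x0) x) with (P (dc c) n x)
      by (symmetry; apply is_derive_unique; exact IHn).
    change (match n with 0%nat => 1 | S _ => INR n + 1 end) with (INR (S n)).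
    rewrite P_S. unfold dc. rewrite (S_INR (S n)). simpl. ring.
Qed.

Lemma Dg_formula (f f1 f2 : R -> R) N x :
  (forall y, is_derive f y (f1 y)) -> (forall y, is_derive f1 y (f2 y)) ->
  Derive (gN f N) x = (f2 x * (1 - f x / f (INR N)) - f1 x * f1 x / f (INR N))
                       / RInt (hN f N) 0 (INR N).
Proof.
  intros H1 H2.
  assert (HD : forall y, Derive f y = f1 y) by (intro; apply is_derive_unique; auto).
  unfold gN. set (K := RInt _ _ _). set (fN := f (INR N)).
  rewrite (Derive_ext _ (fun y => f1 y * (1 - f y / fN) / K)).
  2: { intro t; unfold hN; rewrite HD; reflexivity. }
  apply is_derive_unique. auto_derive.
  { repeat split; eexists; (apply H1 || apply H2). }
  replace (Derive (fun x0 => f1 x0) x) with (f2 x)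
    by (symmetry; apply is_derive_unique; auto).
  replace (Derive (fun x0 => f x0) x) with (f1 x)
    by (symmetry; apply is_derive_unique; auto).
  unfold Rdiv; ring.
Qed.

Lemma K_formula (f f1 f2 : R -> R) N :
  (forall y, is_derive f y (f1 y)) -> (forall y, is_derive f1 y (f2 y)) ->
  f (INR N) <> 0 ->
  RInt (hN f N) 0 (INR N) = (f (INR N) - f 0) ^ 2 / (2 * f (INR N)).
Proof.
  intros H1 H2 Hn. set (fN := f (INR N)).
  assert (HD : forall y, Derive f y = f1 y) by (intro; apply is_derive_unique; auto).
  assert (Hh : forall y, is_derive (fun y => f y - f y * f y / (2*fN)) y (hN f N y)).
  { intro y. unfold hN. rewrite HD. auto_derive.
    { repeat split; eexists; apply H1. }
    replace (Derive (fun x0 => f x0) y) with (f1 y)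
      by (symmetry; apply is_derive_unique; auto).
    fold fN. field. auto. }
  apply is_RInt_unique.
  replace ((fN - f 0) ^ 2 / (2 * fN)) with
    (minus ((fun y => f y - f y * f y / (2*fN)) (INR N)) ((fun y => f y - f y * f y / (2*fN)) 0)).
  - apply (is_RInt_derive (fun y => f y - f y * f y / (2*fN))).
    + intros; apply Hh.
    + intros y _. apply continuous_ext with (f := fun y => f1 y * (1 - f y / fN)).
      { intro t; unfold hN; rewrite HD; reflexivity. }
      apply (ex_derive_continuous (fun y => f1 y * (1 - f y / fN))). auto_derive.
      repeat split; eexists; (apply H1 || apply H2).
  - unfold minus, plus, opp; simpl. fold fN. field. auto.
Qed.

Lemma lub_bound (E : R -> Prop) B y0 : E y0 -> 0 <= y0 -> (forall y, E y -> y <= B) ->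
  is_finite (Lub_Rbar E) /\ 0 <= real (Lub_Rbar E) <= B.
Proof.
  intros Hy0 Hpos HB.
  destruct (Lub_Rbar_correct E) as [Hub Hl].
  assert (Hle : Rbar_le (Lub_Rbar E) B) by (apply Hl; intros y Hy; simpl; auto).
  assert (Hge : Rbar_le y0 (Lub_Rbar E)) by (apply Hub; auto).
  destruct (Lub_Rbar E); simpl in *; try contradiction.
  split; [reflexivity | lra].
Qed.

Lemma Rpower_lim eps : 0 < eps -> is_lim_seq (fun n => Rpower (INR n) (-eps)) 0.
Proof.
  intro He. apply is_lim_seq_spec. intros e. simpl.
  destruct (nfloor_ex (exp (- ln e / eps))) as [k Hk].
  { left; apply exp_pos. }
  exists (S k). intros n Hn.
  apply le_INR in Hn. rewrite S_INR in Hn.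
  assert (HN : exp (- ln e / eps) < INR n) by lra.
  rewrite Rminus_0_r, Rabs_right by (left; apply exp_pos).
  unfold Rpower. rewrite <- (exp_ln e) by apply cond_pos.
  apply exp_increasing.
  assert (HL : ln (exp (- ln e / eps)) < ln (INR n)) by (apply ln_increasing; [apply exp_pos | auto]).
  rewrite ln_exp in HL.
  assert (eps * (- ln e / eps) < eps * ln (INR n)) by (apply Rmult_lt_compat_l; auto).
  replace (eps * (- ln e / eps)) with (- ln e) in H by (field; lra).
  lra.
Qed.

Lemma gbound (f f1 f2 : R -> R) C1 C2 k N x :
  (forall y, is_derive f y (f1 y)) -> (forall y, is_derive f1 y (f2 y)) ->
  (forall x, 0 <= x -> 0 < f x) ->
  (forall x y, 0 <= x -> x < y -> f x < f y) ->
  (forall y M, 0 <= y <= M -> 1 <= M -> Rabs (f1 y) <= C1 * M ^ S k) ->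
  (forall y M, 0 <= y <= M -> 1 <= M -> Rabs (f2 y) <= C2 * M ^ k) ->
  0 <= x <= INR N ->
  Rabs (Derive (gN f N) x) <=
  (C2 * (Rmax 1 (INR N)) ^ k + (C1 * (Rmax 1 (INR N)) ^ S k) ^ 2 / f (INR N))
   * Rabs (/ RInt (hN f N) 0 (INR N)).
Proof.
  intros H1 H2 Hpos Hmon B1 B2 Hx.
  rewrite (Dg_formula f f1 f2) by auto.
  set (M := Rmax 1 (INR N)).
  assert (HM1 : 1 <= M) by apply Rmax_l.
  assert (HxM : 0 <= x <= M) by (pose proof (Rmax_r 1 (INR N)); unfold M; lra).
  set (fN := f (INR N)).
  assert (HfN : 0 < fN) by (apply Hpos; lra).
  assert (Hfx : 0 < f x) by (apply Hpos; lra).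
  assert (Hfx2 : f x <= fN).
  { destruct (Rle_lt_or_eq_dec x (INR N)) as [h|h]; [lra| |].
    - left; apply Hmon; lra.
    - unfold fN; rewrite h; lra. }
  set (u := 1 - f x / fN).
  assert (Hu : 0 <= u <= 1).
  { unfold u. split.
    - assert (f x / fN <= 1) by (apply Rmult_le_reg_r with fN; [lra|]; unfold Rdiv; rewrite Rmult_assoc, Rinv_l; lra). lra.
    - assert (0 <= f x / fN) by (apply Rdiv_le_0_compat; lra). lra. }
  replace ((f2 x * u - f1 x * f1 x / fN) / RInt (hN f N) 0 (INR N)) with ((f2 x * u - f1 x * f1 x / fN) * / RInt (hN f N) 0 (INR N)) by reflexivity. rewrite Rabs_mult. apply Rmult_le_compat_r; [apply Rabs_pos|].
  pose proof (B1 x M HxM HM1) as b1. pose proof (B2 x M HxM HM1) as b2.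
  set (p := f2 x) in *. set (q := f1 x) in *.
  set (P1 := C1 * M ^ S k) in *. set (P2 := C2 * M ^ k) in *.
  assert (hq : q * q <= P1 ^ 2).
  { assert (-P1 <= q <= P1) by (unfold Rabs in b1; destruct (Rcase_abs q); split; lra).
    assert (0 <= P1) by (pose proof (Rabs_pos q); lra). nra. }
  assert (hw : 0 <= q * q / fN <= P1 ^ 2 / fN).
  { unfold Rdiv. pose proof (Rinv_0_lt_compat fN HfN). split.
    - apply Rmult_le_pos; [nra | lra].
    - apply Rmult_le_compat_r; lra. }
  assert (-P2 <= p <= P2) by (unfold Rabs in b2; destruct (Rcase_abs p); split; lra).
  assert (-P2 <= p * u <= P2) by (split; nra).
  fold u. unfold Rabs; destruct (Rcase_abs _); lra.
Qed.

Theorem lemma8 (a : nat -> Z) (r : nat) :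
  (3 <= r)%nat ->
  (0 < a r)%Z ->
  (forall x, 0 <= x -> 0 < polyZ a r x) ->
  (forall x y, 0 <= x -> x < y -> polyZ a r x < polyZ a r y) ->
  forall eps : R, 0 < eps ->
    (forall N : nat, is_finite (supDg (polyZ a r) N)) /\
    is_lim_seq
      (fun N : nat => Rpower (INR N) (2 - eps) * real (supDg (polyZ a r) N))
      (Finite 0).
Proof.
  intros Hr Har Hpos Hmon eps Heps.
  destruct r as [|[|[|m]]]; try (exfalso; lia).
  set (c := fun i => IZR (a i)).
  change (polyZ a (S (S (S m)))) with (P c (S (S (S m)))) in *.
  set (f := P c (S (S (S m)))) in *.
  set (f1 := P (dc c) (S (S m))). set (f2 := P (dc (dc c)) (S m)).
  assert (H1 : forall y, is_derive f y (f1 y)) by (intro; apply P_derive).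
  assert (H2 : forall y, is_derive f1 y (f2 y)) by (intro; apply P_derive).
  set (C1 := A (dc c) (S (S m))). set (C2 := A (dc (dc c)) (S m)).
  set (S0 := A c (S (S m))).
  assert (B1 : forall y M, 0 <= y <= M -> 1 <= M -> Rabs (f1 y) <= C1 * M ^ S (S m))
    by (intros; apply P_bound; auto).
  assert (B2 : forall y M, 0 <= y <= M -> 1 <= M -> Rabs (f2 y) <= C2 * M ^ S m)
    by (intros; apply P_bound; auto).
  set (Bd := fun N : nat => (C2 * (Rmax 1 (INR N)) ^ S m + (C1 * (Rmax 1 (INR N)) ^ S (S m)) ^ 2 / f (INR N))
   * Rabs (/ RInt (hN f N) 0 (INR N))).
  assert (HS : forall N, is_finite (supDg f N) /\ 0 <= real (supDg f N) <= Bd N).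
  { intro N. unfold supDg. apply lub_bound with (y0 := Rabs (Derive (gN f N) 0)).
    - exists 0; split; [split; [lra | apply pos_INR] | reflexivity].
    - apply Rabs_pos.
    - intros y [x [Hx ->]]. unfold Bd. apply (gbound f f1 f2); auto. }
  split; [intro N; apply HS|].
  assert (Hf0 : 0 < f 0) by (apply Hpos; lra).
  destruct (nfloor_ex (1 + 2 * S0 + 4 * f 0)) as [k Hk].
  { pose proof (A_nonneg c (S (S m))). fold S0 in H. lra. }
  set (C := C2 + 2 * C1 ^ 2).
  assert (Hbig : forall n, (S k <= n)%nat -> Bd n <= 16 * C / INR n ^ 2).
  { intros n Hn. apply le_INR in Hn. rewrite S_INR in Hn.
    set (N := INR n) in *.
    assert (HN1 : 1 <= N) by (pose proof (A_nonneg c (S (S m))); fold S0 in H; lra).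
    unfold Bd. fold N. rewrite Rmax_right by lra.
    set (fN := f N).
    assert (HfN : 0 < fN) by (apply Hpos; lra).
    rewrite (K_formula f f1 f2) by (first [solve [auto] | apply Rgt_not_eq; exact HfN]). fold N fN.
    assert (Hc : 1 <= c (S (S (S m)))) by (unfold c; apply IZR_le; lia).
    assert (HP : Rabs (P c (S (S m)) N) <= S0 * N ^ S (S m)) by (apply P_bound; lra).
    assert (HfNe : fN = P c (S (S m)) N + c (S (S (S m))) * N ^ S (S (S m))) by reflexivity.
    set (Y := N ^ m) in *.
    assert (HY : 1 <= Y) by (apply pow_R1_Rle; lra).
    assert (E1 : N ^ S m = N * Y) by reflexivity.
    assert (E2 : N ^ S (S m) = N * N * Y) by (simpl; fold Y; ring).
    assert (E3 : N ^ S (S (S m)) = N * N * N * Y) by (simpl; fold Y; ring).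
    rewrite E2, E3 in *. rewrite E1.
    assert (HS0 : 0 <= S0) by apply A_nonneg.
    assert (HfL : N * N * N * Y / 2 <= fN).
    { assert (- (S0 * (N * N * Y)) <= P c (S (S m)) N)
        by (unfold Rabs in HP; destruct (Rcase_abs (P c (S (S m)) N)); lra).
      assert (N * N * N * Y <= c (S (S (S m))) * (N * N * N * Y)).
      { assert (0 <= N * N * N * Y) by (apply Rmult_le_pos; [|lra]; nra). nra. }
      assert (S0 * (N * N * Y) <= N / 2 * (N * N * Y)).
      { apply Rmult_le_compat_r; [|lra]. apply Rmult_le_pos; [nra|lra]. }
      lra. }
    assert (HNY : 1 <= N * N * Y) by (assert (1 <= N * N) by nra; nra).
    assert (Hf0N : f 0 <= fN / 2).
    { assert (N <= N * N * N * Y) by nra. lra. }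
    set (K := (fN - f 0) ^ 2 / (2 * fN)).
    assert (HK : fN / 8 <= K).
    { unfold K. replace ((fN - f 0) ^ 2 / (2 * fN)) with (fN / 8 + ((fN - f 0) ^ 2 - fN ^ 2 / 4) / (2 * fN)) by (field; lra).
      assert (0 <= ((fN - f 0) ^ 2 - fN ^ 2 / 4) / (2 * fN)).
      { apply Rdiv_le_0_compat; [nra | lra]. }
      lra. }
    assert (HKp : 0 < K) by lra.
    rewrite Rabs_right by (left; apply Rinv_0_lt_compat; exact HKp).
    set (Q := N * N * N * Y) in *.
    assert (HQ : 0 < Q) by (unfold Q; nra).
    assert (HiF : 0 <= / fN <= 2 / Q).
    { split; [left; apply Rinv_0_lt_compat; lra|].
      replace (2 / Q) with (/ (Q / 2)) by (field; lra).
      apply Rinv_le_contravar; lra. }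
    assert (HiK : 0 <= / K <= 16 / Q).
    { split; [left; apply Rinv_0_lt_compat; lra|].
      replace (16 / Q) with (/ (Q / 16)) by (field; lra).
      apply Rinv_le_contravar; lra. }
    assert (HC1 : 0 <= C1) by apply A_nonneg.
    assert (HC2 : 0 <= C2) by apply A_nonneg.
    unfold Rdiv at 1. 
    apply Rle_trans with ((C2 * (N * Y) + (C1 * (N * N * Y)) ^ 2 * (2 / Q)) * (16 / Q)).
    { apply Rmult_le_compat; try lra.
      - apply Rplus_le_le_0_compat; [apply Rmult_le_pos; nra|]. apply Rmult_le_pos; [nra|lra].
      - apply Rplus_le_compat_l. apply Rmult_le_compat_l; [nra|lra]. }
    right. unfold C, Q. field. split; nra. }
  apply is_lim_seq_le_le_loc with (u := fun _ => 0) (w := fun n => (16 * C) * Rpower (INR n) (- eps)).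
  - exists (S k). intros n Hn. destruct (HS n) as [_ [Hs0 Hs1]].
    pose proof (Hbig n Hn) as Hb.
    assert (HN : 0 < INR n) by (apply lt_0_INR; lia).
    assert (Hp : 0 < Rpower (INR n) (2 - eps)) by (unfold Rpower; apply exp_pos).
    split.
    + apply Rmult_le_pos; lra.
    + apply Rle_trans with (Rpower (INR n) (2 - eps) * (16 * C / INR n ^ 2)).
      { apply Rmult_le_compat_l; lra. }
      replace (2 - eps) with (2 + - eps) by ring. rewrite Rpower_plus.
      assert (Rpower (INR n) 2 = INR n ^ 2) by (rewrite <- Rpower_pow; [f_equal; simpl; ring | lra]).
      rewrite H. right. field. lra.
  - apply is_lim_seq_const.
  - replace (Finite 0) with (Rbar_mult (16 * C) 0) by (simpl; f_equal; ring).
    apply is_lim_seq_scal_l. apply Rpower_lim; auto.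
Qed.
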